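(* Let $C$ be a nontrivial group and let $A_1,B_1,A_2,B_2$ be $C$-groups with $A_1\cap B_1=A_2\cap B_2=C$ (the designated copy of $C$). If $\mathcal{F}_{\mathcal{L}_C}(A_1)\equiv\mathcal{F}_{\mathcal{L}_C}(A_2)$ and $\mathcal{F}_{\mathcal{L}_C}(B_1)\equiv\mathcal{F}_{\mathcal{L}_C}(B_2)$, then the amalgamated free products $A_1*_CB_1$ and $A_2*_CB_2$ are existentially equivalent in the language $\mathcal{L}_C$, and hence also in the language of groups.
   Context: The language $\mathcal{L}_C$ of $C$-groups has a constant symbol $d_c$ for each $c\in C$, a binary function $\cdot$, a unary function $^{-1}$ and a unary predicate $\delta$. A $C$-group is a group $H$ in this language satisfying all closed atomic formulas and negations of closed atomic formulas true in $C$ (so $c\mapsto d_c$ embeds $C$ as a subgroup, the designated copy of $C$), together with the axioms $d_c\in\delta$ and $\forall x(x\notin\delta\rightarrow x\neq d_c)$ for all $c\in C$. For $\mathcal{L}_C$-structures, an $\mathcal{L}_C$-isomorphism between subsets $S,T$ is a bijection $\phi:S\to T$ such that $\phi$ and $\phi^{-1}$ fix constants lying in the set, preserve $\delta$, and satisfy $\phi(f(s_1,\dots,s_n))=f(\phi(s_1),\dots,\phi(s_n))$ whenever the $s_i$ and $f(s_1,\dots,s_n)$ lie in $S$ (symmetrically for $\phi^{-1}$). $\mathcal{F}_{\mathcal{L}_C}(X)\equiv\mathcal{F}_{\mathcal{L}_C}(Y)$ means that every finite subset of $X$ is $\mathcal{L}_C$-isomorphic to a finite subset of $Y$ and vice versa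 (i.e. there is a bijection between isomorphism classes of finite subsets matching isomorphic ones). $A_i*_CB_i$ is regarded as a $C$-group via the common copy of $C$. *)

(* Defs.v *)
From Stdlib Require Import List.
Import ListNotations.
Set Implicit Arguments.

Record Grp := {
  carrier :> Type;
  gmul : carrier -> carrier -> carrier;
  ginv : carrier -> carrier;
  gone : carrier;
  gmul_assoc : forall x y z, gmul x (gmul y z) = gmul (gmul x y) z;
  gmul_1l : forall x, gmul gone x = x;
  gmul_Vl : forall x, gmul (ginv x) x = gone
}.

Definition is_hom (G H : Grp) (f : G -> H) : Prop :=
  forall x y, f (gmul G x y) = gmul H (f x) (f y).

Definition nontrivial (G : Grp) : Prop := exists x : G, x <> gone G.

(* A C-group: a group H with constants d_c (c in C) such that c |-> d_c embeds C
   as a subgroup (this is exactly "satisfies the closed atomic formulas and their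
   negations true in C"), and a unary predicate delta containing all d_c. *)
Record CGrp (C : Grp) := {
  cg :> Grp;
  dc : C -> cg;
  dc_hom : is_hom C cg dc;
  dc_inj : forall c1 c2, dc c1 = dc c2 -> c1 = c2;
  cdelta : cg -> Prop;
  cdelta_dc : forall c, cdelta (dc c)
}.

Definition lc_iso_lists (C : Grp) (X Y : CGrp C) (s : list X) (t : list Y) : Prop :=
  NoDup s /\ NoDup t /\ length s = length t /\
  forall (i j k : nat) (x0 : X) (y0 : Y),
    i < length s -> j < length s -> k < length s ->
    let si := nth i s x0 in let sj := nth j s x0 in let sk := nth k s x0 in
    let ti := nth i t y0 in let tj := nth j t y0 in let tk := nth k t y0 in
    (forall c : C, dc X c = si <-> dc Y c = ti) /\
    (cdelta X si <-> cdelta Y ti) /\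
    (gmul X si sj = sk <-> gmul Y ti tj = tk) /\
    (ginv X si = sj <-> ginv Y ti = tj).

(* F_{L_C}(X) is "contained in" F_{L_C}(Y): every finite subset of X is
   L_C-isomorphic to a finite subset of Y. *)
Definition fin_embeds (C : Grp) (X Y : CGrp C) : Prop :=
  forall s : list X, NoDup s -> exists t : list Y, lc_iso_lists X Y s t.

Definition F_equiv (C : Grp) (X Y : CGrp C) : Prop :=
  fin_embeds X Y /\ fin_embeds Y X.

(* P, with maps iA : A -> P and iB : B -> P, is the amalgamated free product
   A *_C B (defined by its universal property), regarded as a C-group via the
   common copy of C; delta is interpreted as the union of the images of the
   delta's of A and B. *)
Definition is_amalgam (C : Grp) (A B P : CGrp C) (iA : A -> P) (iB : B -> P) : Prop :=
  is_hom A P iA /\ is_hom B P iB /\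
  (forall c, iA (dc A c) = dc P c) /\ (forall c, iB (dc B c) = dc P c) /\
  (forall x : P, cdelta P x <->
     (exists a, cdelta A a /\ x = iA a) \/ (exists b, cdelta B b /\ x = iB b)) /\
  (forall (G : Grp) (fA : A -> G) (fB : B -> G),
     is_hom A G fA -> is_hom B G fB -> (forall c, fA (dc A c) = fB (dc B c)) ->
     exists h : P -> G, is_hom P G h /\
       (forall a, h (iA a) = fA a) /\ (forall b, h (iB b) = fB b) /\
       (forall h' : P -> G, is_hom P G h' ->
          (forall a, h' (iA a) = fA a) -> (forall b, h' (iB b) = fB b) ->
          forall x, h' x = h x)).

Inductive term (C : Type) :=
| TVar : nat -> term C
| TConst : C -> term C
| TOne : term C                       (* group identity; L_C-definable as d_1 *)
| TMul : term C -> term C -> term C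
| TInv : term C -> term C.

Inductive qf (C : Type) :=
| FEq : term C -> term C -> qf C
| FDelta : term C -> qf C
| FNot : qf C -> qf C
| FAnd : qf C -> qf C -> qf C
| FOr : qf C -> qf C -> qf C.

Fixpoint teval (C : Grp) (M : CGrp C) (v : nat -> M) (t : term C) : M :=
  match t with
  | TVar _ n => v n
  | TConst c => dc M c
  | TOne _ => gone M
  | TMul t1 t2 => gmul M (teval M v t1) (teval M v t2)
  | TInv t1 => ginv M (teval M v t1)
  end.

Fixpoint qeval (C : Grp) (M : CGrp C) (v : nat -> M) (f : qf C) : Prop :=
  match f with
  | FEq t1 t2 => teval M v t1 = teval M v t2
  | FDelta t => cdelta M (teval M v t)
  | FNot g => ~ qeval M v g
  | FAnd g h => qeval M v g /\ qeval M v h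
  | FOr g h => qeval M v g \/ qeval M v h
  end.

(* The existential sentence "exists x_0 x_1 ..., f" (all variables of the
   quantifier-free f existentially quantified) holds in M. *)
Definition ex_holds (C : Grp) (M : CGrp C) (f : qf C) : Prop :=
  exists v : nat -> M, qeval M v f.

Fixpoint group_term (C : Type) (t : term C) : Prop :=
  match t with
  | TVar _ _ => True
  | TConst _ => False
  | TOne _ => True
  | TMul t1 t2 => group_term t1 /\ group_term t2
  | TInv t1 => group_term t1
  end.

Fixpoint group_qf (C : Type) (f : qf C) : Prop :=
  match f with
  | FEq t1 t2 => group_term t1 /\ group_term t2
  | FDelta _ => False
  | FNot g => group_qf g
  | FAnd g h => group_qf g /\ group_qf h
  | FOr g h => group_qf g /\ group_qf h
  end.

Definition ex_equiv_LC (C : Grp) (M N : CGrp C) : Prop :=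
  forall f : qf C, ex_holds M f <-> ex_holds N f.

Definition ex_equiv_groups (C : Grp) (M N : CGrp C) : Prop :=
  forall f : qf C, group_qf f -> (ex_holds M f <-> ex_holds N f).

(* Main.v *)
Require Import Defs.
From Stdlib Require Import List Classical ClassicalEpsilon FunctionalExtensionality ProofIrrelevance PropExtensionality PeanoNat Lia Bool.
Import ListNotations.
Set Implicit Arguments.

Section GL.
Context (G : Grp).
Notation "x * y" := (gmul G x y).
Notation "1" := (gone G).
Notation "x ^-1" := (ginv G x) (at level 9).

Lemma g_cancel_l x y z : x * y = x * z -> y = z.
Proof.
  intro H. rewrite <- (gmul_1l G y), <- (gmul_1l G z), <- (gmul_Vl G x).
  rewrite <- !gmul_assoc, H. reflexivity.
Qed.

Lemma g_mulV x : x * x^-1 = 1.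
Proof.
  apply (@g_cancel_l (x^-1)). rewrite gmul_assoc, gmul_Vl, gmul_1l.
  apply (@g_cancel_l (x^-1 ^-1)). rewrite gmul_assoc, gmul_Vl, gmul_1l.
  reflexivity.
Qed.

Lemma g_mul1 x : x * 1 = x.
Proof. rewrite <- (gmul_Vl G x), gmul_assoc, g_mulV, gmul_1l. reflexivity. Qed.

Lemma g_cancel_r x y z : y * x = z * x -> y = z.
Proof.
  intro H. rewrite <- (g_mul1 y), <- (g_mul1 z), <- (g_mulV x), !gmul_assoc, H. reflexivity.
Qed.

Lemma g_inv_uniq x y : x * y = 1 -> y = x^-1.
Proof. intro H. apply (@g_cancel_l x). rewrite H, g_mulV. reflexivity. Qed.

Lemma g_invK x : (x^-1)^-1 = x.
Proof. symmetry. apply g_inv_uniq. apply gmul_Vl. Qed.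

Lemma g_invM x y : (x * y)^-1 = y^-1 * x^-1.
Proof.
  symmetry. apply g_inv_uniq.
  rewrite gmul_assoc, <- (gmul_assoc G x y), g_mulV, g_mul1, g_mulV. reflexivity.
Qed.

Lemma g_inv1 : 1^-1 = 1.
Proof. symmetry. apply g_inv_uniq. apply gmul_1l. Qed.

Lemma g_idem x : x * x = x -> x = 1.
Proof. intro H. apply (@g_cancel_l x). rewrite g_mul1. exact H. Qed.

Lemma g_eq_div x y : x * y^-1 = 1 -> x = y.
Proof. intro H. apply (@g_cancel_r (y^-1)). rewrite H, g_mulV. reflexivity. Qed.
End GL.

Lemma hom_one (G H : Grp) (f : G -> H) : is_hom G H f -> f (gone G) = gone H.
Proof.
  intro hf. apply g_idem. rewrite <- hf, gmul_1l. reflexivity.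
Qed.

Lemma hom_inv (G H : Grp) (f : G -> H) : is_hom G H f -> forall x, f (ginv G x) = ginv H (f x).
Proof.
  intros hf x. apply g_inv_uniq. rewrite <- hf, g_mulV. apply hom_one; auto.
Qed.

Lemma dc_one (C : Grp) (X : CGrp C) : dc X (gone C) = gone X.
Proof. apply hom_one, dc_hom. Qed.
Lemma dc_mul (C : Grp) (X : CGrp C) c d : dc X (gmul C c d) = gmul X (dc X c) (dc X d).
Proof. apply dc_hom. Qed.
Lemma dc_inv (C : Grp) (X : CGrp C) c : dc X (ginv C c) = ginv X (dc X c).
Proof. apply hom_inv, dc_hom. Qed.


Section Cos.
Context (C : Grp) (X : CGrp C).

Definition memC (x : X) : option C :=
  match excluded_middle_informative (exists c, dc X c = x) with
  | left H => Some (proj1_sig (constructive_indefinite_description _ H))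
  | right _ => None end.

Lemma memC_spec x c : memC x = Some c <-> dc X c = x.
Proof.
  unfold memC. destruct excluded_middle_informative as [H|H].
  - destruct constructive_indefinite_description as [d Hd]; simpl.
    split; intro E.
    + inversion E; subst; auto.
    + f_equal. apply (dc_inj X). congruence.
  - split; intro E; [discriminate|]. exfalso; eauto.
Qed.

Lemma memC_None x : memC x = None <-> forall c, dc X c <> x.
Proof.
  split.
  - intros E c Hc. apply memC_spec in Hc. congruence.
  - intro H. destruct (memC x) eqn:E; auto. apply memC_spec in E. exfalso; eapply H; eauto.
Qed.

Lemma memC_dc c : memC (dc X c) = Some c.
Proof. apply memC_spec; auto. Qed.

Definition coset (x : X) : X -> Prop := fun y => exists c, y = gmul X (dc X c) x.

Definition rep (x : X) : X :=
  match memC x with Some _ => gone X | None => epsilon (inhabits (gone X)) (coset x) end.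

Lemma coset_same x c : coset (gmul X (dc X c) x) = coset x.
Proof.
  apply functional_extensionality; intro y. apply propositional_extensionality.
  unfold coset; split; intros [d Hd].
  - exists (gmul C d c). rewrite Hd, dc_mul, gmul_assoc; auto.
  - exists (gmul C d (ginv C c)). rewrite Hd, dc_mul, dc_inv, <- !gmul_assoc.
    rewrite (gmul_assoc X (ginv X _)), gmul_Vl, gmul_1l. auto.
Qed.

Lemma memC_same x c : memC (gmul X (dc X c) x) = None <-> memC x = None.
Proof.
  rewrite !memC_None. split; intros H d Hd.
  - apply (H (gmul C c d)). rewrite dc_mul, Hd; auto.
  - apply (H (gmul C (ginv C c) d)). rewrite dc_mul, Hd, dc_inv, gmul_assoc, gmul_Vl, gmul_1l; auto.
Qed.

Lemma rep_same x c : rep (gmul X (dc X c) x) = rep x.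
Proof.
  unfold rep. destruct (memC x) eqn:E.
  - destruct (memC (gmul X (dc X c) x)) eqn:E2; auto.
    apply memC_same in E2. congruence.
  - pose proof (proj2 (memC_same x c) E) as E2. rewrite E2, coset_same. auto.
Qed.

Lemma rep_spec x : exists c, x = gmul X (dc X c) (rep x).
Proof.
  unfold rep. destruct (memC x) as [c|] eqn:E.
  - exists c. apply memC_spec in E. rewrite g_mul1; auto.
  - assert (coset x (epsilon (inhabits (gone X)) (coset x))) as [d Hd].
    { apply epsilon_spec. exists x. exists (gone C). rewrite dc_one, gmul_1l; auto. }
    exists (ginv C d). rewrite Hd, gmul_assoc, dc_inv, gmul_Vl, gmul_1l; auto.
Qed.

Lemma rep_C x c : memC x = Some c -> rep x = gone X.
Proof. unfold rep. intro E; rewrite E; auto. Qed.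

Lemma rep_notC x : memC x = None -> memC (rep x) = None.
Proof.
  intro E. destruct (rep_spec x) as [c Hc].
  rewrite Hc in E. apply memC_same in E. auto.
Qed.

Lemma rep_rep x : rep (rep x) = rep x.
Proof.
  destruct (rep_spec x) as [c Hc].
  rewrite <- (rep_same (rep x) c), <- Hc. auto.
Qed.

Definition cof (x : X) : C :=
  match memC (gmul X x (ginv X (rep x))) with Some c => c | None => gone C end.

Lemma cof_spec x : x = gmul X (dc X (cof x)) (rep x).
Proof.
  destruct (rep_spec x) as [c Hc].
  assert (E : memC (gmul X x (ginv X (rep x))) = Some c).
  { apply memC_spec. set (r := rep x) in *. clearbody r. rewrite Hc at 1. rewrite <- gmul_assoc, g_mulV, g_mul1; auto. }
  unfold cof. rewrite E. auto.
Qed.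

Lemma cof_unique x c y : x = gmul X (dc X c) y -> rep y = y -> cof x = c.
Proof.
  intros Hx Hy. assert (rep x = y) by (rewrite Hx, rep_same; auto).
  pose proof (cof_spec x) as H1. rewrite H in H1. rewrite Hx in H1 at 1.
  apply g_cancel_r in H1. apply (dc_inj X); auto.
Qed.
End Cos.

Unset Implicit Arguments.


Section Perm.
Context (T : Type).
Definition permc := {p : (T -> T) * (T -> T) | forall x, fst p (snd p x) = x /\ snd p (fst p x) = x}.

Lemma perm_eq (p q : permc) : (forall x, fst (proj1_sig p) x = fst (proj1_sig q) x) ->
  (forall x, snd (proj1_sig p) x = snd (proj1_sig q) x) -> p = q.
Proof.
  destruct p as [[f g] Hp], q as [[f' g'] Hq]; simpl; intros H1 H2.
  apply functional_extensionality in H1. apply functional_extensionality in H2. subst.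
  f_equal. apply proof_irrelevance.
Qed.

Definition pmul (p q : permc) : permc.
Proof.
  refine (exist _ (fun x => fst (proj1_sig p) (fst (proj1_sig q) x),
                   fun x => snd (proj1_sig q) (snd (proj1_sig p) x)) _).
  destruct p as [[f g] Hp], q as [[f' g'] Hq]; simpl. intro x.
  split; [rewrite (proj1 (Hq _)); apply Hp | rewrite (proj2 (Hp _)); apply Hq].
Defined.

Definition pinv (p : permc) : permc.
Proof.
  refine (exist _ (snd (proj1_sig p), fst (proj1_sig p)) _).
  destruct p as [[f g] Hp]; simpl. intro x. split; apply Hp.
Defined.

Definition pone : permc := exist (fun p : (T -> T) * (T -> T) => forall x, fst p (snd p x) = x /\ snd p (fst p x) = x) (fun x => x, fun x => x) (fun x => conj eq_refl eq_refl).

Definition PermG : Grp.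
Proof.
  refine (@Build_Grp permc pmul pinv pone _ _ _).
  - intros; apply perm_eq; reflexivity.
  - intros; apply perm_eq; reflexivity.
  - intros [[f g] Hp]; apply perm_eq; simpl; intro x; apply Hp.
Defined.
End Perm.

(* generic action of one factor on normal forms *)
Section Act.
Context (C : Grp) (X : CGrp C) (L : Type) (emb : X -> L) (prj : L -> option X)
  (valid : list L -> Prop).
Definition hn (r : list L) : Prop := match r with y :: _ => prj y = None | [] => True end.
Hypothesis prj_emb : forall x, prj (emb x) = Some x.
Hypothesis emb_prj : forall x y, prj y = Some x -> y = emb x.
Hypothesis valid_emb : forall x r, valid (emb x :: r) <->
   (memC X x = None /\ rep X x = x /\ valid r /\ hn r).

Definition pre_rest (w : C * list L) : X * list L :=
  match snd w with
  | y :: l' => match prj y with Some x => (gmul X (dc X (fst w)) x, l') | None => (dc X (fst w), snd w) end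
  | [] => (dc X (fst w), [])
  end.

Definition Ff (z : X) (r : list L) : C * list L :=
  match memC X z with Some _ => (cof X z, r) | None => (cof X z, emb (rep X z) :: r) end.

Definition act (g : X) (w : C * list L) : C * list L :=
  Ff (gmul X g (fst (pre_rest w))) (snd (pre_rest w)).

Lemma pre_rest_valid w : valid (snd w) -> valid (snd (pre_rest w)) /\ hn (snd (pre_rest w)).
Proof.
  destruct w as [c0 l]; unfold pre_rest; simpl.
  destruct l as [|y l']; simpl.
  - intros; split; auto.
  - destruct (prj y) eqn:E; simpl; intro V.
    + apply emb_prj in E; subst. apply valid_emb in V. tauto.
    + auto.
Qed.

Lemma Ff_valid z r : valid r -> hn r -> valid (snd (Ff z r)).
Proof.
  intros V H. unfold Ff. destruct (memC X z) eqn:E; simpl; auto.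
  apply valid_emb. split; [apply rep_notC; auto|]. split; [apply rep_rep|]. auto.
Qed.

Lemma act_valid g w : valid (snd w) -> valid (snd (act g w)).
Proof.
  intro V. destruct (pre_rest_valid w V). unfold act. apply Ff_valid; auto.
Qed.

Lemma pre_rest_Ff z r : hn r -> pre_rest (Ff z r) = (z, r).
Proof.
  intro H. unfold Ff. destruct (memC X z) as [c|] eqn:E.
  - unfold pre_rest; simpl. pose proof (cof_spec X z) as Hz.
    rewrite (rep_C X z E), g_mul1 in Hz.
    destruct r as [|y r']; simpl in *.
    + rewrite <- Hz; auto.
    + rewrite H. rewrite <- Hz; auto.
  - unfold pre_rest; simpl. rewrite prj_emb. rewrite <- cof_spec. auto.
Qed.

Lemma act_act g h w : valid (snd w) -> act g (act h w) = act (gmul X g h) w.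
Proof.
  intro V. destruct (pre_rest_valid w V) as [V1 H1].
  unfold act at 2. unfold act at 1. rewrite pre_rest_Ff; auto. simpl.
  rewrite gmul_assoc. auto.
Qed.

Lemma act_one w : valid (snd w) -> act (gone X) w = w.
Proof.
  destruct w as [c0 l]. unfold act, pre_rest; simpl.
  destruct l as [|y l']; simpl.
  - intros _. rewrite gmul_1l. unfold Ff. rewrite memC_dc. f_equal.
    apply (cof_unique X (x:=dc X c0) c0 (y:=gone X)).
    + rewrite g_mul1; auto.
    + eapply rep_C. rewrite <- dc_one. apply memC_dc.
  - destruct (prj y) as [x|] eqn:E; simpl; intro V; rewrite gmul_1l.
    + apply emb_prj in E; subst. apply valid_emb in V as (V1 & V2 & V3 & V4).
      unfold Ff. destruct (memC X (gmul X (dc X c0) x)) eqn:E2.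
      * exfalso. rewrite <- (memC_same X x c0) in V1. congruence.
      * rewrite rep_same, V2. f_equal. apply cof_unique with (y := x); auto.
    + unfold Ff. rewrite memC_dc. f_equal.
      apply (cof_unique X (x:=dc X c0) c0 (y:=gone X)).
      * rewrite g_mul1; auto.
      * eapply rep_C. rewrite <- dc_one. apply memC_dc.
Qed.

Lemma act_dc_emb c c0 x l : valid (emb x :: l) -> act (dc X c) (c0, emb x :: l) = (gmul C c c0, emb x :: l).
Proof.
  intro V. apply valid_emb in V as (V1 & V2 & V3 & V4).
  unfold act, pre_rest; simpl. rewrite prj_emb; simpl.
  rewrite gmul_assoc, <- dc_mul. unfold Ff.
  destruct (memC X (gmul X (dc X (gmul C c c0)) x)) eqn:E2.
  - exfalso. rewrite <- (memC_same X x (gmul C c c0)) in V1. congruence.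
  - rewrite rep_same, V2. f_equal. apply cof_unique with (y := x); auto.
Qed.

Lemma act_dc_hn c c0 l : hn l -> act (dc X c) (c0, l) = (gmul C c c0, l).
Proof.
  intro H. unfold act, pre_rest; simpl.
  assert (E : match l with
    | [] => (dc X c0, [])
    | y :: l' => match prj y with Some x => (gmul X (dc X c0) x, l') | None => (dc X c0, l) end end = (dc X c0, l)).
  { destruct l; simpl in *; auto. rewrite H; auto. }
  rewrite E; simpl. rewrite <- dc_mul. unfold Ff. rewrite memC_dc. f_equal.
  apply (cof_unique X (x:=dc X (gmul C c c0)) _ (y:=gone X)).
  + rewrite g_mul1; auto.
  + eapply rep_C. rewrite <- dc_one. apply memC_dc.
Qed.

Lemma act_grow g c0 l : hn l -> memC X g = None ->
  exists c y, act g (c0, l) = (c, emb y :: l).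
Proof.
  intros H Hg. unfold act, pre_rest; simpl.
  assert (E : match l with
    | [] => (dc X c0, [])
    | y :: l' => match prj y with Some x => (gmul X (dc X c0) x, l') | None => (dc X c0, l) end end = (dc X c0, l)).
  { destruct l; simpl in *; auto. rewrite H; auto. }
  rewrite E; simpl. unfold Ff.
  destruct (memC X (gmul X g (dc X c0))) as [d|] eqn:E2.
  - exfalso. apply memC_spec in E2. pose proof (proj1 (memC_None X g) Hg) as Hg2. apply (Hg2 (gmul C d (ginv C c0))).
    rewrite dc_mul, E2, <- gmul_assoc, <- dc_mul, g_mulV, dc_one, g_mul1. auto.
  - eauto.
Qed.

Definition Om := {w : C * list L | valid (snd w)}.

Definition actO (g : X) (w : Om) : Om := exist _ (act g (proj1_sig w)) (act_valid g _ (proj2_sig w)).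

Lemma Om_eq (u v : Om) : proj1_sig u = proj1_sig v -> u = v.
Proof. destruct u, v; simpl; intro; subst; f_equal; apply proof_irrelevance. Qed.

Definition fX (g : X) : PermG Om.
Proof.
  refine (exist _ (actO g, actO (ginv X g)) _).
  intro w; simpl; split; apply Om_eq; simpl; rewrite act_act by apply proj2_sig;
   [rewrite g_mulV | rewrite gmul_Vl]; apply act_one, proj2_sig.
Defined.

Lemma fX_hom : is_hom X (PermG Om) fX.
Proof.
  intros g h. apply perm_eq; simpl; intro w; apply Om_eq; simpl.
  - symmetry; apply act_act, proj2_sig.
  - rewrite act_act by apply proj2_sig. rewrite g_invM. auto.
Qed.
End Act.


Section Letters.
Context (C : Grp) (A B : CGrp C).
Definition L := (A + B)%type.
Definition side (y : L) : bool := match y with inl _ => true | inr _ => false end.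
Definition prjA (y : L) : option A := match y with inl a => Some a | inr _ => None end.
Definition prjB (y : L) : option B := match y with inr b => Some b | inl _ => None end.
Definition goodL (y : L) : Prop := match y with
  | inl a => memC A a = None /\ rep A a = a
  | inr b => memC B b = None /\ rep B b = b end.
Fixpoint valid (l : list L) : Prop := match l with
  | [] => True
  | y :: l' => goodL y /\ valid l' /\ match l' with z :: _ => side y <> side z | [] => True end
  end.

Lemma validA a r : valid (inl a :: r) <-> (memC A a = None /\ rep A a = a /\ valid r /\ hn C A L prjA r).
Proof.
  simpl. destruct r as [|[z|z] r]; simpl; intuition congruence.
Qed.
Lemma validB b r : valid (inr b :: r) <-> (memC B b = None /\ rep B b = b /\ valid r /\ hn C B L prjB r).
Proof.
  simpl. destruct r as [|[z|z] r]; simpl; intuition congruence.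
Qed.
Lemma prjA_emb x y : prjA y = Some x -> y = inl x.
Proof. destruct y; simpl; congruence. Qed.
Lemma prjB_emb x y : prjB y = Some x -> y = inr x.
Proof. destruct y; simpl; congruence. Qed.

Definition OmL := Om C L valid.
Definition fA : A -> PermG OmL := fX C A L inl prjA valid (fun _ => eq_refl) prjA_emb validA.
Definition fB : B -> PermG OmL := fX C B L inr prjB valid (fun _ => eq_refl) prjB_emb validB.
Definition actA := act C A L inl prjA.
Definition actB := act C B L inr prjB.

Lemma act_agree c w : valid (snd w) -> actA (dc A c) w = actB (dc B c) w.
Proof.
  destruct w as [c0 l]; simpl. unfold actA, actB. intro V.
  destruct l as [|[a|b] l'].
  - rewrite !act_dc_hn; simpl; auto.
  - erewrite act_dc_emb with (valid := valid);
      [rewrite act_dc_hn; simpl; auto | first [exact (fun _ => eq_refl) | exact validA | exact V] ..].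
  - erewrite act_dc_emb with (X := B) (valid := valid);
      [rewrite act_dc_hn; simpl; auto | first [exact (fun _ => eq_refl) | exact validB | exact V] ..].
Qed.

Lemma fA_fB c : fA (dc A c) = fB (dc B c).
Proof.
  apply perm_eq; intro w; apply Om_eq; simpl.
  - apply act_agree, proj2_sig.
  - rewrite <- !dc_inv. apply act_agree, proj2_sig.
Qed.
End Letters.


Section Amal.
Context (C : Grp) (A B P : CGrp C) (i : A -> P) (j : B -> P) (hP : is_amalgam A B P i j).
Notation LL := (L C A B).

Definition val (y : LL) : P := match y with inl a => i a | inr b => j b end.
Definition lprod (l : list LL) : P := fold_right (fun y acc => gmul P (val y) acc) (gone P) l.
Fixpoint alt (l : list LL) : Prop := match l with
  | [] => True
  | x :: l' => match l' with y :: _ => side C A B x <> side C A B y | [] => True end /\ alt l' end.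
Definition inC (y : LL) : option C := match y with inl a => memC A a | inr b => memC B b end.
Definition nonC (y : LL) : Prop := inC y = None.
Definition hside (l : list LL) : option bool := match l with y :: _ => Some (side C A B y) | [] => None end.

Lemma NF (l : list LL) : alt l -> Forall nonC l -> l <> [] -> lprod l <> gone P.
Proof.
  destruct hP as (hi & hj & hic & hjc & hd & hu).
  destruct (hu (PermG (OmL C A B)) (fA C A B) (fB C A B)) as (h & hh & hhi & hhj & _).
  { unfold fA; apply fX_hom. } { unfold fB; apply fX_hom. } { apply fA_fB. }
  set (w0 := exist (fun w : C * list LL => valid C A B (snd w)) (gone C, []) I : OmL C A B).
  set (ev := fun p : PermG (OmL C A B) => proj1_sig (fst (proj1_sig p) w0)).
  assert (claim : forall l, alt l -> Forall nonC l ->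
     length (snd (ev (h (lprod l)))) = length l /\ hside (snd (ev (h (lprod l)))) = hside l).
  { induction l0 as [|x l0 IH]; intros Ha Hn.
    - simpl. rewrite (hom_one hh). simpl. auto.
    - simpl in Ha. destruct Ha as [Ha1 Ha2]. inversion Hn; subst.
      destruct (IH Ha2 H2) as [IH1 IH2]. simpl lprod. rewrite hh.
      unfold ev in *. simpl.
      destruct (fst (proj1_sig (h (lprod l0))) w0) as [[c m] Vm]. simpl in IH1, IH2 |- *.
      assert (Hm : match m with [] => True | y :: _ => side C A B y <> side C A B x end).
      { destruct m as [|y m]; auto. destruct l0 as [|z l0]; simpl in *; [discriminate|].
        inversion IH2. congruence. }
      destruct x as [a|b]; simpl.
      + rewrite hhi. simpl.
        destruct (act_grow C A LL inl (prjA C A B) a c m) as (c' & y & Hy).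
        * destruct m as [|[?|?] ?]; simpl in *; auto. congruence.
        * exact H1.
        * rewrite Hy. simpl. auto.
      + rewrite hhj. simpl.
        destruct (act_grow C B LL inr (prjB C A B) b c m) as (c' & y & Hy).
        * destruct m as [|[?|?] ?]; simpl in *; auto. congruence.
        * exact H1.
        * rewrite Hy. simpl. auto. }
  intros Ha Hn Hne E. destruct (claim l Ha Hn) as [C1 _].
  rewrite E, (hom_one hh) in C1. simpl in C1. destruct l; simpl in C1; congruence.
Qed.
End Amal.


Section Ops.
Context (C : Grp) (A B : CGrp C).
Notation LL := (L C A B).
Notation side := (side C A B).
Notation inC := (inC C A B).

Definition lmul (x y : LL) : LL := match x, y with
  | inl a, inl a' => inl (gmul A a a')
  | inr b, inr b' => inr (gmul B b b')
  | _, _ => x end.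
Definition linv (x : LL) : LL := match x with inl a => inl (ginv A a) | inr b => inr (ginv B b) end.
Definition lc (s : bool) (c : C) : LL := if s then inl (dc A c) else inr (dc B c).
Definition lone (s : bool) : LL := if s then inl (gone A) else inr (gone B).
Definition ldelta (x : LL) : Prop := match x with inl a => cdelta A a | inr b => cdelta B b end.

Definition push (st : list LL) (x : LL) : list LL :=
  match st with
  | [] => [x]
  | y :: rest =>
    if Bool.eqb (side y) (side x) then
      match rest with
      | [] => [lmul y x]
      | u :: rest' => match inC (lmul y x) with
                      | Some c => lmul u (lc (side u) c) :: rest'
                      | None => lmul y x :: rest end
      end
    else
      match rest, inC y with
      | [], Some c => [lmul (lc (side x) c) x]
      | _, _ => match inC x with
                | Some c => lmul y (lc (side y) c) :: rest
                | None => x :: y :: rest end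
      end
  end.

Fixpoint red (w : list LL) (st : list LL) : list LL :=
  match w with [] => st | x :: w' => red w' (push st x) end.

Lemma side_lmul x y : side (lmul x y) = side x.
Proof. destruct x, y; reflexivity. Qed.
Lemma side_lc s c : side (lc s c) = s.
Proof. destruct s; reflexivity. Qed.
Lemma side_linv x : side (linv x) = side x.
Proof. destruct x; reflexivity. Qed.

Lemma inC_spec x c : inC x = Some c <-> x = lc (side x) c.
Proof.
  destruct x as [a|b]; simpl; rewrite memC_spec; split; intro H; subst; auto; congruence.
Qed.

Lemma inC_lc s c : inC (lc s c) = Some c.
Proof. apply inC_spec. rewrite side_lc; auto. Qed.

Lemma nonC_lmul_lc u c : inC u = None -> inC (lmul u (lc (side u) c)) = None.
Proof.
  intro H. destruct (inC (lmul u (lc (side u) c))) as [d|] eqn:E; auto.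
  apply inC_spec in E. rewrite side_lmul in E. exfalso.
  destruct u as [a|b]; simpl in *; inversion E.
  - apply (proj1 (memC_None A a) H (gmul C d (ginv C c))).
    rewrite dc_mul, dc_inv, <- H1, <- gmul_assoc, g_mulV, g_mul1; auto.
  - apply (proj1 (memC_None B b) H (gmul C d (ginv C c))).
    rewrite dc_mul, dc_inv, <- H1, <- gmul_assoc, g_mulV, g_mul1; auto.
Qed.

Lemma nonC_lc_lmul u c : inC u = None -> inC (lmul (lc (side u) c) u) = None.
Proof.
  intro H. destruct (inC (lmul (lc (side u) c) u)) as [d|] eqn:E; auto.
  apply inC_spec in E. rewrite side_lmul, side_lc in E. exfalso.
  destruct u as [a|b]; simpl in *; inversion E.
  - apply (proj1 (memC_None A a) H (gmul C (ginv C c) d)).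
    rewrite dc_mul, dc_inv, <- H1, gmul_assoc, gmul_Vl, gmul_1l; auto.
  - apply (proj1 (memC_None B b) H (gmul C (ginv C c) d)).
    rewrite dc_mul, dc_inv, <- H1, gmul_assoc, gmul_Vl, gmul_1l; auto.
Qed.

Lemma nonC_linv x : inC x = None -> inC (linv x) = None.
Proof.
  intro H. destruct (inC (linv x)) as [d|] eqn:E; auto.
  apply inC_spec in E. rewrite side_linv in E. exfalso.
  destruct x as [a|b]; simpl in *; inversion E.
  - apply (proj1 (memC_None A a) H (ginv C d)). rewrite dc_inv, <- H1, g_invK; auto.
  - apply (proj1 (memC_None B b) H (ginv C d)). rewrite dc_inv, <- H1, g_invK; auto.
Qed.
End Ops.


Section Amal2.
Context (C : Grp) (A B P : CGrp C) (i : A -> P) (j : B -> P) (hP : is_amalgam A B P i j)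
  (hI : forall (a : A) (b : B), i a = j b -> exists c, a = dc A c /\ b = dc B c).
Notation LL := (L C A B).
Notation side := (side C A B).
Notation inC := (inC C A B).
Notation val := (val C A B P i j).
Notation lprod := (lprod C A B P i j).
Notation lmul := (lmul C A B).
Notation lc := (lc C A B).
Notation push := (push C A B).
Notation "x * y" := (gmul P x y).

Lemma hi : is_hom A P i. Proof. apply hP. Qed.
Lemma hj : is_hom B P j. Proof. apply hP. Qed.
Lemma hic c : i (dc A c) = dc P c. Proof. apply hP. Qed.
Lemma hjc c : j (dc B c) = dc P c. Proof. apply hP. Qed.

Lemma val_lmul x y : side x = side y -> val (lmul x y) = val x * val y.
Proof. destruct x, y; simpl; intro H; try discriminate; [apply hi | apply hj]. Qed.
Lemma val_lc s c : val (lc s c) = dc P c.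
Proof. destruct s; simpl; [apply hic | apply hjc]. Qed.
Lemma val_linv x : val (linv C A B x) = ginv P (val x).
Proof. destruct x; simpl; apply hom_inv; [apply hi | apply hj]. Qed.

Lemma lprod_app l1 l2 : lprod (l1 ++ l2) = lprod l1 * lprod l2.
Proof.
  induction l1; simpl. rewrite gmul_1l; auto. rewrite IHl1, gmul_assoc; auto.
Qed.

Definition stval (st : list LL) : P := lprod (rev st).
Lemma stval_cons y st : stval (y :: st) = stval st * val y.
Proof. unfold stval. simpl. rewrite lprod_app. simpl. rewrite g_mul1; auto. Qed.

Lemma val_inC x c : inC x = Some c -> val x = dc P c.
Proof. intro H. apply inC_spec in H. rewrite H, val_lc. auto. Qed.

Lemma push_val st x : stval (push st x) = stval st * val x.
Proof.
  destruct st as [|y rest]; simpl.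
  - rewrite stval_cons. unfold stval; simpl. auto.
  - destruct (Bool.eqb (side y) (side x)) eqn:Es.
    + apply eqb_prop in Es. destruct rest as [|u rest'].
      * rewrite !stval_cons, val_lmul by auto. rewrite gmul_assoc. auto.
      * destruct (inC (lmul y x)) as [c|] eqn:Ec.
        -- apply val_inC in Ec. rewrite val_lmul in Ec by auto.
           rewrite !stval_cons, val_lmul by (rewrite side_lc; auto).
           rewrite val_lc, <- Ec, !gmul_assoc. auto.
        -- rewrite !stval_cons, val_lmul by auto. rewrite gmul_assoc. auto.
    + assert (Hd : forall rest0, stval
        (match inC x with
         | Some c => lmul y (lc (side y) c) :: rest0
         | None => x :: y :: rest0 end) = stval (y :: rest0) * val x).
      { intro rest0. destruct (inC x) as [c|] eqn:Ex.
        - apply val_inC in Ex. rewrite !stval_cons, val_lmul by (rewrite side_lc; auto).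
          rewrite val_lc, Ex, gmul_assoc. auto.
        - rewrite (stval_cons (x)); auto. }
      destruct rest as [|u rest'].
      * destruct (inC y) as [c|] eqn:Ey.
        -- apply val_inC in Ey. rewrite !stval_cons, val_lmul by (rewrite side_lc; auto).
           rewrite val_lc, Ey, gmul_assoc. auto.
        -- apply Hd.
      * apply Hd.
Qed.
End Amal2.


Section Red.
Context (C : Grp) (A B : CGrp C).
Notation LL := (L C A B).
Notation side := (side C A B).
Notation inC := (inC C A B).
Notation lmul := (lmul C A B).
Notation lc := (lc C A B).
Notation push := (push C A B).
Notation alt := (alt C A B).
Notation nonC := (nonC C A B).

Definition red_ok (st : list LL) : Prop := length st <= 1 \/ (alt st /\ Forall nonC st).

Lemma red_ok_alt st : red_ok st -> alt st.
Proof. intros [H|[H _]]; auto. destruct st as [|? [|? ?]]; simpl in *; auto; lia. Qed.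

Lemma push_ok st x : red_ok st -> red_ok (push st x).
Proof.
  intro R. destruct st as [|y rest]; simpl. { left; simpl; lia. }
  assert (R2 : forall u r, rest = u :: r -> side y <> side u /\ alt (u :: r) /\ nonC y /\ Forall nonC (u :: r)).
  { intros u r E; subst. destruct R as [R|[R1 R2]]; [simpl in R; lia|]. inversion R2; subst.
    destruct R1 as [R1a R1b]. tauto. }
  destruct (Bool.eqb (side y) (side x)) eqn:Es.
  - apply eqb_prop in Es. destruct rest as [|u rest'].
    + left; simpl; lia.
    + destruct (R2 u rest' eq_refl) as (S1 & S2 & S3 & S4). inversion S4; subst.
      destruct (inC (lmul y x)) as [c|] eqn:Ec.
      * destruct rest' as [|v rest'']; [left; simpl; lia|]. right. destruct S2 as [S2a S2b].
        split; [split; [rewrite side_lmul; auto | auto]|].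
        constructor; auto. apply nonC_lmul_lc; auto.
      * right. simpl. split; [split; [rewrite side_lmul; congruence | exact S2]|].
        constructor; auto.
  - assert (Hd : side y <> side x) by (intro E; rewrite E, eqb_reflx in Es; discriminate).
    destruct rest as [|u rest'].
    + destruct (inC y) as [c|] eqn:Ey; [left; simpl; lia|].
      destruct (inC x) as [c|] eqn:Ex; [left; simpl; lia|].
      right. split; [repeat split; congruence|]. constructor; auto.
    + destruct (R2 u rest' eq_refl) as (S1 & S2 & S3 & S4).
      destruct (inC x) as [c|] eqn:Ex.
      * right. split; [split; [rewrite side_lmul; auto | auto]|].
        inversion S4; subst. constructor; auto. apply nonC_lmul_lc; auto.
      * right. split; [split; [congruence | split; assumption]|]. constructor; auto.
Qed.

Lemma push_nonC st x : alt st -> Forall nonC st -> 2 <= length st ->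
  Forall nonC (push st x) /\ push st x <> [].
Proof.
  intros Ha Hn Hl. destruct st as [|y [|u rest]]; simpl in Hl; try lia.
  inversion Hn; subst. inversion H2; subst. simpl.
  destruct (Bool.eqb (side y) (side x)) eqn:Es.
  - destruct (inC (lmul y x)) as [c|] eqn:Ec.
    + split; [|discriminate]. constructor; auto. apply nonC_lmul_lc; auto.
    + split; [|discriminate]. constructor; auto.
  - destruct (inC x) as [c|] eqn:Ex.
    + split; [|discriminate]. constructor; auto. apply nonC_lmul_lc; auto.
    + split; [|discriminate]. repeat constructor; auto.
Qed.

Lemma red_ok_red w st : red_ok st -> red_ok (red C A B w st).
Proof. revert st; induction w; simpl; intros; auto. apply IHw, push_ok; auto. Qed.
End Red.


Section Amal3.
Context (C : Grp) (A B P : CGrp C) (i : A -> P) (j : B -> P) (hP : is_amalgam A B P i j)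
  (hI : forall (a : A) (b : B), i a = j b -> exists c, a = dc A c /\ b = dc B c).
Notation LL := (L C A B).
Notation side := (side C A B).
Notation inC := (inC C A B).
Notation val := (val C A B P i j).
Notation lprod := (lprod C A B P i j).
Notation stval := (stval C A B P i j).
Notation lmul := (lmul C A B).
Notation linv := (linv C A B).
Notation lc := (lc C A B).
Notation push := (push C A B).
Notation alt := (alt C A B).
Notation nonC := (nonC C A B).
Notation red_ok := (red_ok C A B).
Notation "x * y" := (gmul P x y).

Lemma stval_inv st : ginv P (stval st) = lprod (map linv st).
Proof.
  induction st as [|y st IH].
  - unfold stval; simpl. apply g_inv1.
  - rewrite (stval_cons C A B P i j), g_invM, IH, <- (val_linv C A B P i j hP). simpl. auto.
Qed.

Lemma alt_map_linv st : alt st -> alt (map linv st).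
Proof.
  induction st as [|y st IH]; simpl; auto. intros [H1 H2]. split; auto.
  destruct st; simpl; auto. rewrite !side_linv; auto.
Qed.

Lemma NF_st st : alt st -> Forall nonC st -> st <> [] -> stval st <> gone P.
Proof.
  intros Ha Hn Hne E.
  apply (NF C A B P i j hP (map linv st)).
  - apply alt_map_linv; auto.
  - apply Forall_map. eapply Forall_impl; [|exact Hn]. intros y Hy. apply nonC_linv. auto.
  - destruct st; simpl; congruence.
  - rewrite <- stval_inv, E. apply g_inv1.
Qed.

Lemma NF1 x : nonC x -> val x <> gone P.
Proof.
  intros Hx E. apply (NF C A B P i j hP [x]); simpl; auto; try congruence.
  rewrite g_mul1; auto.
Qed.

Lemma inj_gen (X : CGrp C) (f : X -> P) (hf : is_hom X P f) (hfc : forall c, f (dc X c) = dc P c)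
  (hN : forall d, memC X d = None -> f d <> gone P) a a' : f a = f a' -> a = a'.
Proof.
  intro E. apply (g_eq_div X).
  set (d := gmul X a (ginv X a')).
  assert (Hd : f d = gone P) by (unfold d; rewrite hf, (hom_inv hf), E; apply g_mulV).
  destruct (memC X d) as [c|] eqn:Ec.
  - apply memC_spec in Ec. rewrite <- Ec, hfc in Hd. rewrite <- (dc_one P) in Hd.
    apply (dc_inj P) in Hd. rewrite Hd, dc_one in Ec. auto.
  - exfalso. apply (hN d Ec Hd).
Qed.

Lemma val_inj x y : side x = side y -> val x = val y -> x = y.
Proof.
  destruct x as [a|b], y as [a'|b']; simpl; intros Hs E; try discriminate; f_equal.
  - apply (inj_gen A i (hi C A B P i j hP) (hic C A B P i j hP)); auto.
    intros d Hd. apply (NF1 (inl d)). auto.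
  - apply (inj_gen B j (hj C A B P i j hP) (hjc C A B P i j hP)); auto.
    intros d Hd. apply (NF1 (inr d)). auto.
Qed.

Lemma val_cross x y : side x <> side y -> val x = val y -> exists c, x = lc (side x) c.
Proof.
  destruct x as [a|b], y as [a'|b']; simpl; intros Hs E; try congruence.
  - destruct (hI a b' E) as [c [H1 _]]. exists c. subst; auto.
  - destruct (hI a' b (eq_sym E)) as [c [_ H1]]. exists c. subst; auto.
Qed.

Lemma val_lone s : val (lone C A B s) = gone P.
Proof.
  destruct s; simpl; apply hom_one; [apply (hi C A B P i j hP) | apply (hj C A B P i j hP)].
Qed.

Lemma val_one_iff x : val x = gone P <-> lmul x x = x.
Proof.
  split; intro H.
  - assert (x = lone C A B (side x)).
    { apply val_inj. destruct x; auto. rewrite val_lone; auto. }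
    rewrite H0. destruct (side x); simpl; rewrite gmul_1l; auto.
  - apply g_idem. rewrite <- (val_lmul C A B P i j hP) by auto. rewrite H. auto.
Qed.

Lemma answer_eq st : red_ok st ->
  (stval st = gone P <-> st = [] \/ exists x, st = [x] /\ lmul x x = x).
Proof.
  intro R. destruct st as [|x [|y st']].
  - split; auto.
  - unfold stval; simpl. rewrite g_mul1. rewrite val_one_iff. split.
    + intro; right; eauto.
    + intros [H|[z [H1 H2]]]; [discriminate|]. inversion H1; subst; auto.
  - destruct R as [R|[R1 R2]]; [simpl in R; lia|]. split.
    + intro E. exfalso. apply (NF_st _ R1 R2); auto. discriminate.
    + intros [H|[z [H1 H2]]]; discriminate.
Qed.

Lemma delta_P p : cdelta P p <-> exists y, ldelta C A B y /\ p = val y.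
Proof.
  destruct hP as (_ & _ & _ & _ & hd & _). rewrite hd. split.
  - intros [[a [H1 H2]]|[b [H1 H2]]]; [exists (inl a) | exists (inr b)]; auto.
  - intros [[a|b] [H1 H2]]; [left; exists a | right; exists b]; auto.
Qed.

Lemma answer_delta st : red_ok st ->
  (cdelta P (stval st) <-> st = [] \/ exists x, st = [x] /\ ldelta C A B x).
Proof.
  intro R. destruct st as [|x [|y st']].
  - split; auto. intros _. apply delta_P. exists (inl (dc A (gone C))). split.
    + apply cdelta_dc.
    + simpl. rewrite (hic C A B P i j hP), dc_one. auto.
  - unfold stval; simpl. rewrite g_mul1. rewrite delta_P. split.
    + intros [z [Hz E]]. right. exists x. split; auto.
      destruct (Bool.bool_dec (side x) (side z)) as [Hs|Hs].
      * rewrite (val_inj x z Hs E); auto.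
      * destruct (val_cross x z Hs E) as [c Hc]. rewrite Hc. destruct (side x); apply cdelta_dc.
    + intros [H|[z [H1 H2]]]; [discriminate|]. inversion H1; subst. eauto.
  - pose proof R as R0. destruct R as [R|[R1 R2]]; [simpl in R; lia|]. split.
    + intro E. exfalso. apply delta_P in E. destruct E as [z [_ E]].
      set (st := x :: y :: st') in *.
      destruct (push_nonC C A B st (linv z) R1 R2) as [N1 N2]; [simpl; lia|].
      apply (NF_st (push st (linv z))); auto.
      * apply red_ok_alt, push_ok; auto.
      * rewrite (push_val C A B P i j hP), E, (val_linv C A B P i j hP). apply g_mulV.
    + intros [H|[z [H1 H2]]]; discriminate.
Qed.
End Amal3.


Section Trace.
Context (C : Grp) (A B : CGrp C).
Notation LL := (L C A B).
Notation side := (side C A B).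
Notation inC := (inC C A B).
Notation lmul := (lmul C A B).
Notation lc := (lc C A B).
Notation push := (push C A B).

Definition ptr (st : list LL) (x : LL) : list LL :=
  match st with
  | [] => [x]
  | y :: rest =>
    [x; y; lmul y x] ++
    (match rest with
     | u :: _ => u :: match inC (lmul y x) with Some c => [lc (side u) c; lmul u (lc (side u) c)] | None => [] end
     | [] => [] end) ++
    (match inC y with Some c => [lc (side x) c; lmul (lc (side x) c) x] | None => [] end) ++
    (match inC x with Some c => [lc (side y) c; lmul y (lc (side y) c)] | None => [] end)
  end.

Fixpoint redtr (w : list LL) (st : list LL) : list LL :=
  match w with [] => [] | x :: w' => ptr st x ++ redtr w' (push st x) end.
End Trace.

Section Sim.
Context (C : Grp) (A1 B1 A2 B2 : CGrp C).
Notation L1 := (L C A1 B1).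
Notation L2 := (L C A2 B2).
Context (phi : L1 -> L2) (S : L1 -> Prop).
Hypothesis side_phi : forall x, side C A2 B2 (phi x) = side C A1 B1 x.
Hypothesis inC_phi : forall x, S x -> inC C A2 B2 (phi x) = inC C A1 B1 x.
Hypothesis lmul_phi : forall x y, S x -> S y -> S (lmul C A1 B1 x y) -> side C A1 B1 x = side C A1 B1 y ->
  phi (lmul C A1 B1 x y) = lmul C A2 B2 (phi x) (phi y).

Lemma lc_phi s c : S (lc C A1 B1 s c) -> phi (lc C A1 B1 s c) = lc C A2 B2 s c.
Proof.
  intro H. pose proof (inC_phi _ H) as E. rewrite inC_lc in E.
  apply inC_spec in E. rewrite E, side_phi, side_lc. auto.
Qed.

Ltac inS H := apply H; unfold ptr;
  (repeat match goal with E : inC _ _ _ _ = _ |- _ => rewrite E end);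
  simpl; rewrite ?in_app_iff; simpl; tauto.

Lemma push_sim st x : (forall y, In y (ptr C A1 B1 st x) -> S y) ->
  push C A2 B2 (map phi st) (phi x) = map phi (push C A1 B1 st x).
Proof.
  intro HS. destruct st as [|y rest]; [simpl; auto|].
  assert (Sx : S x) by (apply HS; simpl; auto).
  assert (Sy : S y) by (apply HS; simpl; auto).
  assert (Sz : S (lmul C A1 B1 y x)) by (apply HS; simpl; auto).
  simpl. rewrite !side_phi.
  destruct (Bool.eqb (side C A1 B1 y) (side C A1 B1 x)) eqn:Es.
  - apply eqb_prop in Es. rewrite <- lmul_phi by auto.
    destruct rest as [|u rest']; simpl; auto.
    rewrite inC_phi by auto.
    destruct (inC C A1 B1 (lmul C A1 B1 y x)) as [c|] eqn:Ec; simpl; auto.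
    rewrite side_phi.
    assert (S u) by inS HS. assert (S (lc C A1 B1 (side C A1 B1 u) c)) by inS HS.
    rewrite <- lc_phi by auto. rewrite <- lmul_phi; auto.
    + inS HS.
    + rewrite side_lc; auto.
  - rewrite (inC_phi y) by auto. rewrite (inC_phi x) by auto.
    assert (Hx : match inC C A1 B1 x with
      | Some c => lmul C A2 B2 (phi y) (lc C A2 B2 (side C A1 B1 y) c) :: map phi rest
      | None => phi x :: phi y :: map phi rest end =
      map phi (match inC C A1 B1 x with
      | Some c => lmul C A1 B1 y (lc C A1 B1 (side C A1 B1 y) c) :: rest
      | None => x :: y :: rest end)).
    { destruct (inC C A1 B1 x) as [c|] eqn:Ex; simpl; auto.
      assert (Sl : S (lc C A1 B1 (side C A1 B1 y) c)) by inS HS.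
      rewrite <- lc_phi by auto. rewrite <- lmul_phi; auto.
      - inS HS.
      - rewrite side_lc; auto. }
    destruct rest as [|u rest']; simpl; auto.
    destruct (inC C A1 B1 y) as [c|] eqn:Ey; simpl; auto.
    assert (Sl : S (lc C A1 B1 (side C A1 B1 x) c)) by inS HS.
    rewrite <- lc_phi by auto. rewrite <- lmul_phi; auto.
    + inS HS.
    + rewrite side_lc; auto.
Qed.

Lemma red_sim w st : (forall y, In y (redtr C A1 B1 w st) -> S y) ->
  red C A2 B2 (map phi w) (map phi st) = map phi (red C A1 B1 w st).
Proof.
  revert st; induction w as [|x w IH]; intros st HS; simpl; auto.
  simpl in HS. rewrite push_sim.
  - apply IH. intros y Hy. apply HS. apply in_or_app; auto.
  - intros y Hy. apply HS. apply in_or_app; auto.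
Qed.
End Sim.


Section Syms.
Context (C : Grp) (A B P : CGrp C) (i : A -> P) (j : B -> P) (hP : is_amalgam A B P i j).
Notation LL := (L C A B).
Notation val := (val C A B P i j).
Notation lprod := (lprod C A B P i j).
Notation stval := (stval C A B P i j).
Notation linv := (linv C A B).

Definition sym := (bool * LL + C)%type.
Definition norm (s : sym) : LL := match s with
  | inl (false, x) => x | inl (true, x) => linv x | inr c => lc C A B true c end.
Definition flip (s : sym) : sym := match s with
  | inl (b, x) => inl (negb b, x) | inr c => inr (ginv C c) end.
Definition winv (W : list sym) : list sym := rev (map flip W).
Definition sprod (W : list sym) : P := lprod (map norm W).

Fixpoint tw (w : nat -> list sym) (t : term C) : list sym :=
  match t with
  | TVar _ n => w n
  | TConst c => [inr c]
  | TOne _ => []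
  | TMul t1 t2 => tw w t1 ++ tw w t2
  | TInv t1 => winv (tw w t1)
  end.

Lemma sprod_app W1 W2 : sprod (W1 ++ W2) = gmul P (sprod W1) (sprod W2).
Proof. unfold sprod. rewrite map_app. apply (lprod_app C A B P i j). Qed.

Lemma val_flip s : val (norm (flip s)) = ginv P (val (norm s)).
Proof.
  destruct s as [[[|] x]|c]; simpl.
  - rewrite (val_linv C A B P i j hP), g_invK. auto.
  - apply (val_linv C A B P i j hP).
  - change (val (lc C A B true (ginv C c)) = ginv P (val (lc C A B true c))).
    rewrite !(val_lc C A B P i j hP). apply dc_inv.
Qed.

Lemma sprod_winv W : sprod (winv W) = ginv P (sprod W).
Proof.
  induction W as [|s W IH]; unfold winv in *; simpl.
  - unfold sprod; simpl. symmetry; apply g_inv1.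
  - rewrite sprod_app, IH. unfold sprod at 2 3. simpl. rewrite val_flip, g_mul1, g_invM. auto.
Qed.

Lemma tw_eval w t : sprod (tw w t) = teval P (fun n => sprod (w n)) t.
Proof.
  induction t; simpl; auto.
  - unfold sprod; simpl. rewrite g_mul1. apply (hic C A B P i j hP).
  - rewrite sprod_app, IHt1, IHt2. auto.
  - rewrite sprod_winv, IHt. auto.
Qed.

Lemma red_val w st : stval (red C A B w st) = gmul P (stval st) (lprod w).
Proof.
  revert st; induction w as [|x w IH]; intro st; simpl.
  - rewrite g_mul1; auto.
  - rewrite IH, (push_val C A B P i j hP), <- gmul_assoc. auto.
Qed.

Lemma lprod_rinv l : lprod (rev (map linv l)) = ginv P (lprod l).
Proof.
  induction l as [|x l IH]; simpl.
  - symmetry; apply g_inv1.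
  - rewrite (lprod_app C A B P i j), IH. simpl. rewrite g_mul1, (val_linv C A B P i j hP), g_invM. auto.
Qed.

Definition subc := {p : P | exists l, lprod l = p}.
Lemma subc_eq (u v : subc) : proj1_sig u = proj1_sig v -> u = v.
Proof. destruct u, v; simpl; intro; subst; f_equal; apply proof_irrelevance. Qed.

Definition smul (u v : subc) : subc.
Proof.
  refine (exist _ (gmul P (proj1_sig u) (proj1_sig v)) _).
  destruct u as [p [l1 H1]], v as [q [l2 H2]]; simpl. exists (l1 ++ l2).
  rewrite (lprod_app C A B P i j); congruence.
Defined.
Definition sinv (u : subc) : subc.
Proof.
  refine (exist _ (ginv P (proj1_sig u)) _).
  destruct u as [p [l1 H1]]; simpl. exists (rev (map linv l1)). rewrite lprod_rinv; congruence.
Defined.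
Definition sone : subc.
Proof. refine (exist _ (gone P) _). exists []. auto. Defined.

Definition SubG : Grp.
Proof.
  refine (@Build_Grp subc smul sinv sone _ _ _); intros; apply subc_eq; simpl.
  - apply gmul_assoc. - apply gmul_1l. - apply gmul_Vl.
Defined.

Lemma generation (p : P) : exists l, lprod l = p.
Proof.
  destruct hP as (hi & hj & hic & hjc & _ & hu).
  pose (fA := fun a : A => (exist _ (i a) (ex_intro _ [inl a] (g_mul1 P (i a))) : SubG)).
  pose (fB := fun b : B => (exist _ (j b) (ex_intro _ [inr b] (g_mul1 P (j b))) : SubG)).
  destruct (hu SubG fA fB) as (h & hh & hhi & hhj & _).
  { intros x y; apply subc_eq; simpl; apply hi. }
  { intros x y; apply subc_eq; simpl; apply hj. }
  { intros c; apply subc_eq; simpl. rewrite hic, hjc; auto. }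
  destruct (hu P i j hi hj) as (h0 & _ & _ & _ & hu0).
  { intros c; rewrite hic, hjc; auto. }
  assert (E1 := hu0 (fun x => x) (fun x y => eq_refl) (fun a => eq_refl) (fun b => eq_refl) p).
  assert (E2 := hu0 (fun x => proj1_sig (h x))).
  rewrite <- E2 in E1.
  - simpl in E1. rewrite E1. apply proj2_sig.
  - intros x y. rewrite hh. auto.
  - intro a. rewrite hhi. auto.
  - intro b. rewrite hhj. auto.
Qed.
End Syms.


Lemma dedup_ex (T : Type) (l : list T) : exists l', NoDup l' /\ forall x, In x l <-> In x l'.
Proof.
  induction l as [|a l [l' [H1 H2]]].
  - exists []. split; [constructor | tauto].
  - destruct (classic (In a l')) as [Ha|Ha].
    + exists l'. split; auto. intro x. simpl. rewrite H2. split; [intros [E|E]; subst; auto | auto].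
    + exists (a :: l'). split; [constructor; auto|]. intro x. simpl. rewrite H2. tauto.
Qed.

Fixpoint idx {T : Type} (a : T) (l : list T) : nat :=
  match l with [] => 0 | x :: l' => if excluded_middle_informative (x = a) then 0 else S (idx a l') end.

Lemma idx_spec {T : Type} (a : T) l d : In a l -> idx a l < length l /\ nth (idx a l) l d = a.
Proof.
  induction l as [|x l IH]; simpl; [tauto|]. intro H.
  destruct (excluded_middle_informative (x = a)) as [E|E]; simpl.
  - split; [lia | auto].
  - destruct H as [H|H]; [congruence|]. destruct (IH H). split; [lia | auto].
Qed.

Section Iso.
Context (C : Grp) (X Y : CGrp C) (s : list X) (t : list Y) (H : lc_iso_lists X Y s t).
Definition pmap (a : X) : Y := nth (idx a s) t (gone Y).

Lemma pmap_props a a' a'' : In a s -> In a' s -> In a'' s ->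
  (forall c : C, dc X c = a <-> dc Y c = pmap a) /\
  (cdelta X a <-> cdelta Y (pmap a)) /\
  (gmul X a a' = a'' <-> gmul Y (pmap a) (pmap a') = pmap a'') /\
  (ginv X a = a' <-> ginv Y (pmap a) = pmap a').
Proof.
  intros Ha Ha' Ha''.
  destruct H as (_ & _ & _ & Hiso).
  destruct (idx_spec a s a Ha) as [I1 N1].
  destruct (idx_spec a' s a Ha') as [I2 N2].
  destruct (idx_spec a'' s a Ha'') as [I3 N3].
  pose proof (Hiso (idx a s) (idx a' s) (idx a'' s) a (gone Y) I1 I2 I3) as K.
  simpl in K. rewrite N1, N2, N3 in K. exact K.
Qed.
End Iso.

Lemma memC_iff (C : Grp) (X Y : CGrp C) (x : X) (y : Y) :
  (forall c, dc X c = x <-> dc Y c = y) -> memC X x = memC Y y.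
Proof.
  intro H. destruct (memC X x) as [c|] eqn:E.
  - apply memC_spec in E. symmetry. apply memC_spec, H; auto.
  - destruct (memC Y y) as [c|] eqn:E2; auto.
    apply memC_spec in E2. apply H in E2. apply memC_spec in E2. congruence.
Qed.


Lemma eq_iff_div (G : Grp) (x y : G) : x = y <-> gmul G x (ginv G y) = gone G.
Proof. split; intro H; [subst; apply g_mulV | apply g_eq_div; auto]. Qed.

Section Transfer.
Context (C : Grp) (A1 B1 P1 A2 B2 P2 : CGrp C)
  (i1 : A1 -> P1) (j1 : B1 -> P1) (i2 : A2 -> P2) (j2 : B2 -> P2)
  (hP1 : is_amalgam A1 B1 P1 i1 j1) (hP2 : is_amalgam A2 B2 P2 i2 j2)
  (hI1 : forall (a : A1) (b : B1), i1 a = j1 b -> exists c, a = dc A1 c /\ b = dc B1 c)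
  (hI2 : forall (a : A2) (b : B2), i2 a = j2 b -> exists c, a = dc A2 c /\ b = dc B2 c)
  (hA : fin_embeds A1 A2) (hB : fin_embeds B1 B2).
Notation L1 := (L C A1 B1).
Notation L2 := (L C A2 B2).
Notation sym1 := (sym C A1 B1).
Notation sym2 := (sym C A2 B2).
Notation norm1 := (norm C A1 B1).
Notation norm2 := (norm C A2 B2).

Fixpoint atoms (w : nat -> list sym1) (f : qf C) : list (list sym1) :=
  match f with
  | FEq t1 t2 => [tw C A1 B1 w t1 ++ winv C A1 B1 (tw C A1 B1 w t2)]
  | FDelta t => [tw C A1 B1 w t]
  | FNot g => atoms w g
  | FAnd g h => atoms w g ++ atoms w h
  | FOr g h => atoms w g ++ atoms w h
  end.

Definition normtr (W : list sym1) : list L1 :=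
  flat_map (fun s => match s with inl (_, x) => [x; linv C A1 B1 x] | inr c => [lc C A1 B1 true c] end) W.

Definition trace (W : list sym1) : list L1 :=
  redtr C A1 B1 (map norm1 W) [] ++ red C A1 B1 (map norm1 W) [] ++ normtr W.

Lemma transfer (f : qf C) (v1 : nat -> P1) : qeval P1 v1 f -> exists v2, qeval P2 v2 f.
Proof.
  intro Hf.
  pose (l1 := fun n => proj1_sig (constructive_indefinite_description _ (generation C A1 B1 P1 i1 j1 hP1 (v1 n)))).
  assert (Hl1 : forall n, lprod C A1 B1 P1 i1 j1 (l1 n) = v1 n).
  { intro n. unfold l1. destruct constructive_indefinite_description; auto. }
  pose (w1 := fun n => map (fun x => (inl (false, x) : sym1)) (l1 n)).
  assert (Hw1 : (fun n => sprod C A1 B1 P1 i1 j1 (w1 n)) = v1).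
  { apply functional_extensionality; intro n. unfold sprod, w1. rewrite map_map. simpl.
    rewrite map_id. apply Hl1. }
  pose (Sl := flat_map trace (atoms w1 f)).
  destruct (dedup_ex _ (flat_map (fun x : L1 => match x with inl a => [a] | inr _ => [] end) Sl))
    as [sA [HsA1 HsA2]].
  destruct (dedup_ex _ (flat_map (fun x : L1 => match x with inr b => [b] | inl _ => [] end) Sl))
    as [sB [HsB1 HsB2]].
  destruct (hA sA HsA1) as [tA HtA].
  destruct (hB sB HsB1) as [tB HtB].
  pose (phi := fun x : L1 => match x with
     | inl a => (inl (pmap C A1 A2 sA tA a) : L2) | inr b => inr (pmap C B1 B2 sB tB b) end).
  pose (S := fun x : L1 => match x with inl a => In a sA | inr b => In b sB end).
  assert (HS : forall y, In y Sl -> S y).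
  { intros [a|b] Hy; simpl; [apply HsA2 | apply HsB2]; apply in_flat_map; eexists; split; eauto; simpl; auto. }
  assert (side_phi : forall x, side C A2 B2 (phi x) = side C A1 B1 x) by (intros [a|b]; reflexivity).
  assert (inC_phi : forall x, S x -> inC C A2 B2 (phi x) = inC C A1 B1 x).
  { intros [a|b] Hx; simpl in *; symmetry; apply memC_iff.
    - apply (pmap_props C A1 A2 sA tA HtA a a a); auto.
    - apply (pmap_props C B1 B2 sB tB HtB b b b); auto. }
  assert (lmul_phi : forall x y, S x -> S y -> S (lmul C A1 B1 x y) -> side C A1 B1 x = side C A1 B1 y ->
     phi (lmul C A1 B1 x y) = lmul C A2 B2 (phi x) (phi y)).
  { intros [a|b] [a'|b'] Hx Hy Hz Hs; simpl in *; try discriminate; f_equal; symmetry.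
    - apply (pmap_props C A1 A2 sA tA HtA a a' _); auto.
    - apply (pmap_props C B1 B2 sB tB HtB b b' _); auto. }
  assert (linv_phi : forall x, S x -> S (linv C A1 B1 x) -> phi (linv C A1 B1 x) = linv C A2 B2 (phi x)).
  { intros [a|b] Hx Hy; simpl in *; f_equal; symmetry.
    - apply (pmap_props C A1 A2 sA tA HtA a _ a); auto.
    - apply (pmap_props C B1 B2 sB tB HtB b _ b); auto. }
  assert (idem_phi : forall x, S x -> (lmul C A1 B1 x x = x <-> lmul C A2 B2 (phi x) (phi x) = phi x)).
  { intros [a|b] Hx; simpl in *.
    - pose proof (proj1 (proj2 (proj2 (pmap_props C A1 A2 sA tA HtA a a a Hx Hx Hx)))) as K.
      split; intro E; injection E; intro E'; f_equal; apply K; auto.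
    - pose proof (proj1 (proj2 (proj2 (pmap_props C B1 B2 sB tB HtB b b b Hx Hx Hx)))) as K.
      split; intro E; injection E; intro E'; f_equal; apply K; auto. }
  assert (delta_phi : forall x, S x -> (ldelta C A1 B1 x <-> ldelta C A2 B2 (phi x))).
  { intros [a|b] Hx; simpl in *.
    - apply (pmap_props C A1 A2 sA tA HtA a a a); auto.
    - apply (pmap_props C B1 B2 sB tB HtB b b b); auto. }
  pose (phi' := fun s : sym1 => match s with inl (b, x) => (inl (b, phi x) : sym2) | inr c => inr c end).
  assert (norm_phi : forall W, (forall y, In y (normtr W) -> S y) ->
     map norm2 (map phi' W) = map phi (map norm1 W)).
  { induction W as [|s W IH]; intro H; simpl; auto.
    simpl in H. f_equal.
    - destruct s as [[[|] x]|c]; simpl.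
      + symmetry; apply linv_phi; apply H; simpl; auto.
      + auto.
      + change (lc C A2 B2 true c = phi (lc C A1 B1 true c)).
        symmetry. apply (lc_phi C A1 B1 A2 B2 phi S side_phi inC_phi). apply H; simpl; auto.
    - apply IH. intros y Hy. apply H. apply in_or_app. auto. }
  assert (map_winv : forall W, map phi' (winv C A1 B1 W) = winv C A2 B2 (map phi' W)).
  { intro W. unfold winv. rewrite map_rev, !map_map. f_equal. apply map_ext.
    intros [[b x]|c]; reflexivity. }
  assert (tw_phi : forall t, tw C A2 B2 (fun n => map phi' (w1 n)) t = map phi' (tw C A1 B1 w1 t)).
  { induction t; simpl; auto.
    - rewrite map_app, IHt1, IHt2; auto.
    - rewrite IHt, map_winv; auto. }
  pose (v2 := fun n => sprod C A2 B2 P2 i2 j2 (map phi' (w1 n))).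
  assert (ev1 : forall t, teval P1 v1 t = sprod C A1 B1 P1 i1 j1 (tw C A1 B1 w1 t)).
  { intro t. rewrite (tw_eval C A1 B1 P1 i1 j1 hP1), Hw1. auto. }
  assert (ev2 : forall t, teval P2 v2 t = sprod C A2 B2 P2 i2 j2 (map phi' (tw C A1 B1 w1 t))).
  { intro t. rewrite <- tw_phi, (tw_eval C A2 B2 P2 i2 j2 hP2). auto. }
  assert (key : forall W, (forall y, In y (trace W) -> S y) ->
     (sprod C A1 B1 P1 i1 j1 W = gone P1 <-> sprod C A2 B2 P2 i2 j2 (map phi' W) = gone P2) /\
     (cdelta P1 (sprod C A1 B1 P1 i1 j1 W) <-> cdelta P2 (sprod C A2 B2 P2 i2 j2 (map phi' W)))).
  { intros W HW. unfold trace in HW.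
    assert (HW1 : forall y, In y (redtr C A1 B1 (map norm1 W) []) -> S y)
      by (intros; apply HW; apply in_or_app; auto).
    assert (HW2 : forall y, In y (red C A1 B1 (map norm1 W) []) -> S y)
      by (intros; apply HW; apply in_or_app; right; apply in_or_app; auto).
    assert (HW3 : forall y, In y (normtr W) -> S y)
      by (intros; apply HW; apply in_or_app; right; apply in_or_app; auto).
    assert (E1 : sprod C A1 B1 P1 i1 j1 W = stval C A1 B1 P1 i1 j1 (red C A1 B1 (map norm1 W) [])).
    { rewrite (red_val C A1 B1 P1 i1 j1 hP1). unfold stval at 1; simpl. rewrite gmul_1l. auto. }
    assert (E2 : sprod C A2 B2 P2 i2 j2 (map phi' W) =
                 stval C A2 B2 P2 i2 j2 (red C A2 B2 (map phi (map norm1 W)) [])).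
    { rewrite (red_val C A2 B2 P2 i2 j2 hP2). unfold stval at 1; simpl. rewrite gmul_1l.
      unfold sprod. rewrite norm_phi; auto. }
    assert (E3 : red C A2 B2 (map phi (map norm1 W)) [] = map phi (red C A1 B1 (map norm1 W) [])).
    { apply (red_sim C A1 B1 A2 B2 phi S side_phi inC_phi lmul_phi (map norm1 W) [] HW1). }
    assert (R1 : red_ok C A1 B1 (red C A1 B1 (map norm1 W) [])) by (apply red_ok_red; left; simpl; lia).
    assert (R2 : red_ok C A2 B2 (red C A2 B2 (map phi (map norm1 W)) [])) by (apply red_ok_red; left; simpl; lia).
    rewrite E1, E2. split.
    - rewrite (answer_eq C A1 B1 P1 i1 j1 hP1 _ R1), (answer_eq C A2 B2 P2 i2 j2 hP2 _ R2), E3.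
      destruct (red C A1 B1 (map norm1 W) []) as [|x [|y st]]; simpl.
      + split; auto.
      + assert (Sx : S x) by (apply HW2; simpl; auto).
        split; intros [H|[z [H1 H2]]]; try discriminate; right; injection H1 as E; rewrite <- E in H2.
        * exists (phi x). split; auto. apply idem_phi; auto.
        * exists x. split; auto. apply idem_phi; auto.
      + split; intros [H|[z [H1 H2]]]; discriminate.
    - rewrite (answer_delta C A1 B1 P1 i1 j1 hP1 hI1 _ R1), (answer_delta C A2 B2 P2 i2 j2 hP2 hI2 _ R2), E3.
      destruct (red C A1 B1 (map norm1 W) []) as [|x [|y st]]; simpl.
      + split; auto.
      + assert (Sx : S x) by (apply HW2; simpl; auto).
        split; intros [H|[z [H1 H2]]]; try discriminate; right; injection H1 as E; rewrite <- E in H2.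
        * exists (phi x). split; auto. apply delta_phi; auto.
        * exists x. split; auto. apply delta_phi; auto.
      + split; intros [H|[z [H1 H2]]]; discriminate. }
  assert (claim : forall g, (forall W, In W (atoms w1 g) -> forall y, In y (trace W) -> S y) ->
     (qeval P1 v1 g <-> qeval P2 v2 g)).
  { induction g; simpl; intro H.
    - rewrite ev1, ev1, ev2, ev2, eq_iff_div, (eq_iff_div P2).
      rewrite <- (sprod_winv C A1 B1 P1 i1 j1 hP1), <- (sprod_app C A1 B1 P1 i1 j1).
      rewrite <- (sprod_winv C A2 B2 P2 i2 j2 hP2), <- (sprod_app C A2 B2 P2 i2 j2).
      rewrite <- map_winv, <- map_app. apply (proj1 (key _ (H _ (or_introl eq_refl)))).
    - rewrite ev1, ev2. apply (proj2 (key _ (H _ (or_introl eq_refl)))).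
    - rewrite IHg; auto. tauto.
    - rewrite (IHg1 (fun W HW => H W (in_or_app _ _ _ (or_introl HW)))), (IHg2 (fun W HW => H W (in_or_app _ _ _ (or_intror HW)))). tauto.
    - rewrite (IHg1 (fun W HW => H W (in_or_app _ _ _ (or_introl HW)))), (IHg2 (fun W HW => H W (in_or_app _ _ _ (or_intror HW)))). tauto. }
  exists v2. apply claim; auto.
  intros W HW y Hy. apply HS. apply in_flat_map. eauto.
Qed.
End Transfer.


Theorem mainTheorem7 (C : Grp) (hC : nontrivial C)
  (A1 B1 A2 B2 P1 P2 : CGrp C)
  (i1 : A1 -> P1) (j1 : B1 -> P1) (i2 : A2 -> P2) (j2 : B2 -> P2)
  (hP1 : is_amalgam A1 B1 P1 i1 j1) (hP2 : is_amalgam A2 B2 P2 i2 j2)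
  (hI1 : forall (a : A1) (b : B1), i1 a = j1 b -> exists c, a = dc A1 c /\ b = dc B1 c)
  (hI2 : forall (a : A2) (b : B2), i2 a = j2 b -> exists c, a = dc A2 c /\ b = dc B2 c)
  (hA : F_equiv A1 A2) (hB : F_equiv B1 B2) :
  ex_equiv_LC P1 P2 /\ ex_equiv_groups P1 P2.
Proof.
  assert (H : ex_equiv_LC P1 P2).
  { intro f. split.
    - intros [v Hv]. exact (transfer C A1 B1 P1 A2 B2 P2 i1 j1 i2 j2 hP1 hP2 hI1 hI2 (proj1 hA) (proj1 hB) f v Hv).
    - intros [v Hv]. exact (transfer C A2 B2 P2 A1 B1 P1 i2 j2 i1 j1 hP2 hP1 hI2 hI1 (proj2 hA) (proj2 hB) f v Hv). }
  split; auto. intros f _. apply H.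
Qed.
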